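(* Let $(X,T),(Y,S)$ be topological dynamical systems and $f\in C(X\times Y)$. (a) If $(Y,S)$ has the specification property, then $\delta(f)\le\gamma(f)$. (b) If $(X,T)$ has the specification property, then $\delta(f)\ge\gamma(f)$.
   Context: A topological dynamical system $(X,T)$: $X$ compact metrizable, $T$ a homeomorphism. Write $\mathbb{A}_kf(x,y)=\frac1k\sum_{j=0}^{k-1}f(T^jx,S^jy)$. $\gamma(f)=\sup_{y\in Y}\inf_{x\in X}\limsup_{k\to\infty}\mathbb{A}_kf(x,y)$ and $\delta(f)=\limsup_{k\to\infty}\max_{y\in Y}\min_{x\in X}\mathbb{A}_kf(x,y)$. A specification in $X$ is $\xi=(x_i,[a_i,b_i])_{i=1}^n$ with integers $a_1\le b_1<a_2\le\dots<a_n\le b_n$; $D$-spaced if $a_{i+1}-b_i\ge D$; $x$ is an $\eta$-tracing if $d(T^jx,T^jx_i)<\eta$ for all $i$, $j\in[a_i,b_i]$ ($d$ a compatible metric). $(X,T)$ has the specification property if for each $\eta>0$ there is $D(\eta)\in\mathbb{N}$ such that every $D(\eta)$-spaced specification admits an $\eta$-tracing. *)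

(* Defs.v *)
From HB Require Import structures.
From mathcomp Require Import all_boot all_order all_algebra.
From mathcomp Require Import all_classical all_reals all_analysis.
Set Implicit Arguments. Unset Strict Implicit. Unset Printing Implicit Defensive.
Import Order.TTheory GRing.Theory Num.Theory.
Import numFieldNormedType.Exports.
Local Open Scope classical_set_scope.
Local Open Scope ring_scope.

Definition iterz {X : Type} (T Tinv : X -> X) (j : int) (x : X) : X :=
  match j with
  | Posz n => iter n T x
  | Negz n => iter n.+1 Tinv x
  end.

(* (X,T) is a topological dynamical system: X compact metrizable (here: a
   compact metric space), T a homeomorphism with inverse Tinv *)
Definition tds {R : realType} (X : metricType R) (T Tinv : X -> X) : Prop :=
  [/\ compact [set: X], continuous T, continuous Tinv,
      cancel T Tinv & cancel Tinv T].

Definition spaced_spec {X : Type} (D : nat) (n : nat) (xs : nat -> X)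
    (a b : nat -> int) : Prop :=
  [/\ (0 < n)%N,
      (forall i, (i < n)%N -> a i <= b i),
      (forall i, (i.+1 < n)%N -> b i < a i.+1) &
      (forall i, (i.+1 < n)%N -> (D%:Z <= a i.+1 - b i))].

Definition traces {R : realType} {X : metricType R} (T Tinv : X -> X)
    (eta : R) (n : nat) (xs : nat -> X) (a b : nat -> int) (x : X) : Prop :=
  forall i, (i < n)%N -> forall j : int, a i <= j <= b i ->
    mdist (iterz T Tinv j x) (iterz T Tinv j (xs i)) < eta.

Definition specification_property {R : realType} {X : metricType R}
    (T Tinv : X -> X) : Prop :=
  forall eta : R, 0 < eta -> exists D : nat,
    forall n xs a b, spaced_spec D n xs a b ->
      exists x, traces T Tinv eta n xs a b x.

Definition avg {R : realType} {X Y : Type} (T : X -> X) (S : Y -> Y)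
    (f : X * Y -> R) (k : nat) (x : X) (y : Y) : R :=
  k%:R^-1 * \sum_(j < k) f (iter j T x, iter j S y).

Definition gammaf {R : realType} {X Y : Type} (T : X -> X) (S : Y -> Y)
    (f : X * Y -> R) : \bar R :=
  ereal_sup [set ereal_inf [set limn_esup (fun k => (avg T S f k x y)%:E)
                           | x in [set: X]] | y in [set: Y]].

(* delta(f) = limsup_k max_y min_x A_k f(x,y)  (max/min taken as sup/inf,
   which are attained by compactness and continuity) *)
Definition deltaf {R : realType} {X Y : Type} (T : X -> X) (S : Y -> Y)
    (f : X * Y -> R) : \bar R :=
  limn_esup (fun k => ereal_sup [set ereal_inf [set (avg T S f k x y)%:E
                           | x in [set: X]] | y in [set: Y]]).

(* Main.v *)
Require Import Defs.
From HB Require Import structures.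
From mathcomp Require Import all_boot all_order all_algebra.
From mathcomp Require Import all_classical all_reals all_analysis.
From mathcomp Require Import lra zify.
Import Order.TTheory GRing.Theory Num.Theory.
Import numFieldNormedType.Exports.
Local Open Scope classical_set_scope.
Local Open Scope ring_scope.

Section LS.
Context {R : realType}.
Local Open Scope ereal_scope.

Lemma limn_esupE (u : (\bar R)^nat) : limn_esup u = ereal_inf (range (esups u)).
Proof. by rewrite limn_esup_lim; apply: cvg_lim => //; exact: cvg_esups_inf. Qed.

Lemma small_inv (K e : R) (n k : nat) : (0 < e)%R -> (`|K| / e < n%:R)%R -> (n <= k)%N ->
  (K / k%:R <= e)%R.
Proof.
move=> e0 hn nk.
have k0 : (0 < k%:R :> R)%R.
  rewrite ltr0n; apply: leq_trans nk; rewrite -(ltr0n R).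
  by apply: le_lt_trans hn; rewrite divr_ge0 // ltW.
rewrite ler_pdivrMr //.
apply: (le_trans (ler_norm K)).
have : (`|K| < n%:R * e)%R by rewrite -ltr_pdivrMr.
move=> /ltW /le_trans; apply; rewrite mulrC ler_pM2l // ler_nat //.
Qed.

Lemma LS_le (u : (\bar R)^nat) (c K : R) :
  (forall k, (0 < k)%N -> u k <= (c + K / k%:R)%:E) -> limn_esup u <= c%:E.
Proof.
move=> H; apply/lee_addgt0Pr => e e0.
pose n := (Num.truncn (`|K| / e)).+1.
rewrite limn_esupE; apply: (le_trans (ereal_inf_lbound _)); first by exists n.
apply: ge_ereal_sup => _ [k /= nk <-].
have k0 : (0 < k)%N by apply: leq_trans nk.
apply: (le_trans (H k k0)); rewrite -EFinD lee_fin lerD2l.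
exact: (small_inv _ _ _ _ e0 (truncnS_gt _) nk).
Qed.

Lemma LS_ge (u : (\bar R)^nat) (c K : R) :
  (forall k, (0 < k)%N -> (c - K / k%:R)%:E <= u k) -> c%:E <= limn_esup u.
Proof.
move=> H; apply/lee_subgt0Pr => e e0.
rewrite limn_esupE; apply: le_ereal_inf_tmp => _ [m _ <-].
pose n := maxn m (Num.truncn (`|K| / e)).+1.
have nk : (n >= m)%N by rewrite leq_maxl.
apply: (le_trans _ (ereal_sup_ubound _)); last by exists n.
have k0 : (0 < n)%N by apply: leq_trans (leq_maxr _ _).
apply: le_trans (H n k0); rewrite -EFinD lee_fin lerD2l lerN2.
exact: (small_inv _ _ _ _ e0 (truncnS_gt _) (leq_maxr _ _)).
Qed.

Lemma LS_lt (u : (\bar R)^nat) (l : \bar R) : limn_esup u < l ->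
  exists n, forall k, (n <= k)%N -> u k < l.
Proof.
rewrite limn_esupE => /ereal_inf_lt [_ [n _ <-] hn]; exists n => k nk.
apply: le_lt_trans hn; apply: ereal_sup_ubound; by exists k.
Qed.

Lemma le_einf_real (e b : \bar R) : (forall c : R, c%:E < e -> c%:E <= b) -> e <= b.
Proof.
move=> H; case: e H => [r| |] H.
- apply/lee_subgt0Pr => d d0; apply: H; rewrite lte_fin; lra.
- have := H (fine b + 1)%R (ltry _); case: b {H} => [s| |] //=; rewrite ?lee_fin ?leey //.
  move=> h; exfalso; lra.
- by rewrite leNye.
Qed.
End LS.

Section Block.
Context {R : realType}.

Lemma sum_le_cst (N : nat) (g : nat -> R) (B : R) : (forall n, `|g n| <= B) ->
  \sum_(n < N) g n <= N%:R * B.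
Proof.
move=> hg; apply: (@le_trans _ _ (\sum_(n < N) B)).
  by apply: ler_sum => i _; apply: le_trans (ler_norm _) (hg _).
by rewrite sumr_const card_ord mulr_natl.
Qed.

Lemma block_sum (k D : nat) (B c : R) : (0 < k)%N ->
  let P := (k + D)%N in
  let c' := (k%:R * c + D%:R * B) / P%:R in
  forall N (g : nat -> R), (forall n, `|g n| <= B) ->
  (forall m, \sum_(t < k) g (m * P + t)%N <= k%:R * c) ->
  \sum_(n < N) g n <= N%:R * c' + P%:R * (B + `|c'|).
Proof.
move=> k0 P c' N; elim/ltn_ind: N => N IH g hg hb.
have B0 : 0 <= B by apply: le_trans (normr_ge0 _) (hg 0%N).
have P0 : (0 < P)%N by rewrite /P addn_gt0 k0.
have hc' : P%:R * c' = k%:R * c + D%:R * B.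
  by rewrite /c' mulrC -mulrA mulVf ?mulr1 // pnatr_eq0 -lt0n.
have hc1 : - `|c'| <= c' by rewrite lerNl -normrN ler_norm.
case: (ltnP N P) => hNP.
- have h1 := sum_le_cst N _ _ hg.
  have h2 : N%:R * B <= P%:R * B by rewrite ler_wpM2r // ler_nat ltnW.
  have h3 : N%:R * `|c'| <= P%:R * `|c'| by rewrite ler_wpM2r // ler_nat ltnW.
  have h4 : N%:R * (- `|c'|) <= N%:R * c' by rewrite ler_wpM2l.
  nra.
- rewrite -(subnKC hNP) big_split_ord /=.
  have hfirst : \sum_(i < P) g i <= P%:R * c'.
    rewrite hc' /P big_split_ord /=.
    apply: lerD.
      by have := hb 0%N; rewrite mul0n.
    exact: sum_le_cst _ _ _ (fun n => hg _).
  have hsecond := IH (N - P)%N _ (fun n => g (P + n)%N) (fun n => hg _).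
  have hs2 : \sum_(i < N - P) g (P + i)%N <= (N - P)%:R * c' + P%:R * (B + `|c'|).
    apply: hsecond.
      by rewrite ltn_subrL P0 (leq_trans P0 hNP).
    by move=> m; under eq_bigr do rewrite addnA -mulSn; exact: hb.
  rewrite natrD; lra.
Qed.

Lemma block_LS_le (k D : nat) (B c : R) (g : nat -> R) : (0 < k)%N ->
  (forall n, `|g n| <= B) ->
  (forall m, \sum_(t < k) g (m * (k + D) + t)%N <= k%:R * c) ->
  (limn_esup (fun N => (N%:R^-1 * \sum_(n < N) g n)%:E) <=
   ((k%:R * c + D%:R * B) / (k + D)%:R)%:E)%E.
Proof.
move=> k0 hg hb; set c' := (_ / _).
apply: (LS_le _ c' ((k + D)%:R * (B + `|c'|))) => N N0.
rewrite lee_fin; have h := block_sum k D B c k0 N g hg hb; rewrite /= -/c' in h.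
have N0' : 0 < N%:R :> R by rewrite ltr0n.
have hN : N%:R^-1 * N%:R = 1 :> R by rewrite mulVf // gt_eqF.
have iN : 0 <= N%:R^-1 :> R by rewrite invr_ge0 ltW.
apply: le_trans (ler_wpM2l iN h) _.
by rewrite mulrDr mulrA hN mul1r [_^-1 * _]mulrC.
Qed.

Lemma block_LS_ge (k D : nat) (B c : R) (g : nat -> R) : (0 < k)%N ->
  (forall n, `|g n| <= B) ->
  (forall m, k%:R * c <= \sum_(t < k) g (m * (k + D) + t)%N) ->
  (((k%:R * c - D%:R * B) / (k + D)%:R)%:E <=
   limn_esup (fun N => (N%:R^-1 * \sum_(n < N) g n)%:E))%E.
Proof.
move=> k0 hg hb; set c'' := (_ / _).
have hg' : forall n, `|(fun n => - g n) n| <= B by move=> n /=; rewrite normrN.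
have hb' : forall m, \sum_(t < k) (fun n => - g n) (m * (k + D) + t)%N <= k%:R * (- c).
  by move=> m; rewrite sumrN mulrN lerN2.
have e : (k%:R * - c + D%:R * B) / (k + D)%:R = - c''.
  by rewrite /c'' -mulNr opprB mulrN addrC.
apply: (LS_ge _ c'' ((k + D)%:R * (B + `|c''|))) => N N0.
rewrite lee_fin; have h := block_sum k D B (- c) k0 N _ hg' hb'; rewrite /= e normrN sumrN in h.
have N0' : 0 < N%:R :> R by rewrite ltr0n.
have hN : N%:R^-1 * N%:R = 1 :> R by rewrite mulVf // gt_eqF.
have h2 : N%:R * c'' - (k + D)%:R * (B + `|c''|) <= \sum_(n < N) g n.
  by move: h; rewrite mulrN; lra.
have iN : 0 <= N%:R^-1 :> R by rewrite invr_ge0 ltW.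
apply: le_trans _ (ler_wpM2l iN h2).
by rewrite mulrBr mulrA hN mul1r [_^-1 * _]mulrC.
Qed.
End Block.

Lemma fbound (R : realType) (X Y : metricType R) (f : X * Y -> R) :
  compact [set: X] -> compact [set: Y] -> continuous f ->
  exists B : R, forall p, `|f p| <= B.
Proof.
move=> cX cY cf.
have cXY : compact [set: X * Y] by rewrite -setXTT; exact: compact_setX.
have cim : compact (f @` [set: X * Y]).
  by apply: continuous_compact => //; apply: continuous_subspaceT.
have := compact_bounded cim.
case=> M [Mr HM].
exists (`|M| + 1) => p; apply: (HM (`|M| + 1)).
  by rewrite (le_lt_trans (ler_norm M)) // ltrDl.
by exists p.
Qed.

Lemma unif_cont (R : realType) (X Y : metricType R) (f : X * Y -> R) :
  compact [set: X * Y] -> continuous f -> forall e : R, 0 < e ->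
  exists2 eta : R, 0 < eta & forall p q : X * Y, mdist p.1 q.1 < eta ->
     mdist p.2 q.2 < eta -> `|f p - f q| < e.
Proof.
move=> cK cf e e0.
have := (compact_near_coveringP _).1 cK nat \oo
  (fun n p => forall q : X * Y, mdist p.1 q.1 < n.+1%:R^-1 ->
     mdist p.2 q.2 < n.+1%:R^-1 -> `|f p - f q| < e) _.
case.
- move=> p0 _.
  have e2 : 0 < e / 2 by rewrite divr_gt0.
  have : \forall p \near p0, `|f p0 - f p| < e / 2 by exact: cvgr_dist_lt (cf p0) _ e2.
  move=> /nbhs_ballP [r r0 Hr].
  have r2 : 0 < r / 2 by rewrite divr_gt0.
  pose N := Num.truncn (r / 2)^-1.
  have hN : forall n, (N <= n)%N -> n.+1%:R^-1 < r / 2.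
    move=> n Nn; rewrite -[r/2]invrK ltf_pV2 ?posrE ?invr_gt0 //.
    apply: lt_le_trans (truncnS_gt _) _; rewrite ler_nat ltnS //.
  exists (ball p0 (r / 2), [set n | (N <= n)%N]) => /=.
    split => //; first exact: nbhsx_ballx.
    by exists N.
  case=> p n /= [hp hn] q hq1 hq2.
  have hpq : ball p (r / 2) q.
    by split; rewrite /= ballEmdist /=; apply: lt_trans (hN n hn).
  have hq : ball p0 r q by rewrite [r](splitr r); exact: ball_triangle hp hpq.
  have h2 := Hr _ hq.
  have hr : r / 2 <= r.
    have : 0 < r by [].
    move=> h; lra.
  have h3 := Hr _ (le_ball hr hp).
  rewrite (splitr e); apply: le_lt_trans (ler_distD (f p0) _ _) _.
  by rewrite distrC ltrD.
- move=> N _ H; exists N.+1%:R^-1; first by rewrite invr_gt0.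
  by move=> p q h1 h2; exact: (H N (leqnn N) p I q h1 h2).
Qed.

Section Trace.
Context {R : realType} {Z : metricType R}.

Lemma iter_cont (U : Z -> Z) n : continuous U -> continuous (iter n U).
Proof.
move=> hU; elim: n => [|n IH] x /=; first exact: cvg_id.
exact: (continuous_comp (IH x) (hU _)).
Qed.

Lemma iter_cancel (U Uinv : Z -> Z) : cancel Uinv U ->
  forall a t z, iter (a + t) U (iter a Uinv z) = iter t U z.
Proof.
move=> hc a t z; rewrite addnC iterD; congr (iter t U _).
elim: a => [|a IH] //; by rewrite iterSr /= hc.
Qed.

Lemma inf_trace (U Uinv : Z -> Z) : compact [set: Z] -> continuous U ->
  cancel Uinv U -> specification_property U Uinv ->
  forall eta : R, 0 < eta -> exists D : nat, forall k (zs : nat -> Z), (0 < k)%N ->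
  exists z, forall m t, (t < k)%N ->
    mdist (iter (m * (k + D) + t) U z) (iter t U (zs m)) <= eta.
Proof.
move=> cZ cU hc hspec eta eta0.
have [D HD] := hspec eta eta0.
exists D => k zs k0.
pose P := (k + D)%N.
pose E M := [set z | forall m t, (m <= M)%N -> (t < k)%N ->
   mdist (iter (m * P + t) U z) (iter t U (zs m)) < eta].
have En : forall M, E M !=set0.
  move=> M.
  have sp : spaced_spec D M.+1 (fun i => iter (i * P) Uinv (zs i))
     (fun i => (i * P)%:Z) (fun i => (i * P + k.-1)%:Z).
    split => //.
    - move=> i _; rewrite lez_nat; lia.
    - move=> i _; rewrite ltz_nat /P; lia.
    - move=> i _; rewrite /P; lia.
  have [x hx] := HD _ _ _ _ sp.
  exists x => m t mM tk.
  have := hx m mM (m * P + t)%:Z.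
  rewrite !lez_nat leq_addr /=.
  rewrite iter_cancel //; apply.
  lia.
have Edec : forall M N, (M <= N)%N -> E N `<=` E M.
  move=> M N MN z hz m t mM tk; apply: hz => //; exact: leq_trans mM MN.
have FF : Filter (filter_from [set: nat] E).
  apply: filter_fromT_filter; first by exists 0%N.
  move=> i j; exists (maxn i j) => z hz; split.
    by apply: Edec hz; rewrite leq_maxl.
  by apply: Edec hz; rewrite leq_maxr.
have PF : ProperFilter (filter_from [set: nat] E).
  by apply: filter_from_proper => i _; exact: En.
have [z [_ hz]] := cZ _ PF (filterT).
exists z => m t tk; rewrite leNgt; apply/negP => hlt.
set n := (m * P + t)%N in hlt.
set c := iter t U (zs m) in hlt.
pose r := mdist (iter n U z) c - eta.
have r0 : 0 < r by rewrite /r subr_gt0.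
have hB : nbhs z (iter n U @^-1` ball (iter n U z) r).
  by apply: (iter_cont U n cU z); exact: nbhsx_ballx.
have [w [hwE hwB]] := hz _ _ (ex_intro2 _ _ m I (fun x h => h)) hB.
have h1 := hwE m t (leqnn m) tk.
rewrite /= ballEmdist /= in hwB.
have := metric_triangle (iter n U z) (iter n U w) c.
rewrite /r in hwB; rewrite -/n -/c in h1.
lra.
Qed.
End Trace.

Section Avg.
Context {R : realType} {X Y : Type} (T : X -> X) (S : Y -> Y) (f : X * Y -> R).

Lemma avg_bound (B : R) : (forall p, `|f p| <= B) ->
  forall k x y, `|avg T S f k x y| <= B.
Proof.
move=> hB k x y; have B0 : 0 <= B := le_trans (normr_ge0 _) (hB (x, y)).
rewrite /avg normrM; case: k => [|k]; first by rewrite big_ord0 normr0 mulr0.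
have hs : `|\sum_(j < k.+1) f (iter j T x, iter j S y)| <= k.+1%:R * B.
  apply: le_trans (ler_norm_sum _ _ _) _.
  apply: (sum_le_cst k.+1 (fun j => `|f (iter j T x, iter j S y)|) B).
  by move=> n; rewrite normr_id.
rewrite normfV normr_nat.
apply: le_trans (ler_wpM2l _ hs) _; first by rewrite invr_ge0.
by rewrite mulrA mulVf ?mul1r // pnatr_eq0.
Qed.

Lemma avg_mul k x y : (0 < k)%N ->
  k%:R * avg T S f k x y = \sum_(j < k) f (iter j T x, iter j S y).
Proof. by move=> k0; rewrite /avg mulrA mulfV ?mul1r // pnatr_eq0 -lt0n. Qed.
End Avg.

Theorem theorem2p13 (R : realType) (X Y : metricType R)
    (T Tinv : X -> X) (S Sinv : Y -> Y) (f : X * Y -> R) :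
  tds T Tinv -> tds S Sinv -> continuous f ->
  (specification_property S Sinv -> (deltaf T S f <= gammaf T S f)%E) /\
  (specification_property T Tinv -> (gammaf T S f <= deltaf T S f)%E).
Proof.
move=> [cX cT cTi T1 T2] [cY cS cSi S1 S2] cf.
have [B hB] := fbound _ _ _ f cX cY cf.
have cXY : compact [set: X * Y] by rewrite -setXTT; exact: compact_setX.
have hA := avg_bound T S f B hB.
have hAl : forall k x y, - B <= avg T S f k x y.
  by move=> k x y; have := hA k x y; rewrite ler_norml => /andP [].
have hAu : forall k x y, avg T S f k x y <= B.
  by move=> k x y; have := hA k x y; rewrite ler_norml => /andP [].
split.
- move=> hspec.
  case: (pselect (exists y : Y, True)) => [[y0 _t]|Yn]; last first.
    have h : (deltaf T S f <= -oo)%E.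
      rewrite /deltaf limn_esupE; apply: ge_ereal_inf; exists (esups (fun k =>
        ereal_sup [set ereal_inf [set (avg T S f k x y)%:E | x in [set: X]]
                  | y in [set: Y]]) 0%N); first by exists 0%N.
      rewrite /esups /=; apply: ge_ereal_sup => _ [k _ <-].
      apply: ge_ereal_sup => z [y _ _]; exfalso; apply: Yn; by exists y.
    exact: le_trans h (leNye _).
  have key : forall eps : R, 0 < eps -> exists D : nat, forall k y' c, (0 < k)%N ->
      (forall x, c <= avg T S f k x y') ->
      (((k%:R * (c - eps) - D%:R * B) / (k + D)%:R)%:E <= gammaf T S f)%E.
    move=> eps eps0.
    have [eta0 eta00 hu] := unif_cont _ _ _ f cXY cf eps eps0.
    have eta2 : 0 < eta0 / 2 by rewrite divr_gt0.
    have eta3 : eta0 / 2 < eta0 by lra.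
    have [D hD] := inf_trace S Sinv cY cS S2 hspec (eta0 / 2) eta2.
    exists D => k y' c k0 hc.
    have [y hy] := hD k (fun _ => y') k0.
    apply: le_trans _ (ereal_sup_ubound _); last by exists y.
    apply: le_ereal_inf_tmp => _ [x _ <-].
    apply: (block_LS_ge k D B (c - eps) (fun n => f (iter n T x, iter n S y)) k0).
      by move=> n; exact: hB.
    move=> m.
    have h1 := hc (iter (m * (k + D)) T x).
    have h2 : k%:R * c <= \sum_(t < k) f (iter t T (iter (m * (k + D)) T x), iter t S y').
      by rewrite -avg_mul //; apply: ler_wpM2l => //; rewrite ler0n.
    have h3 : \sum_(t < k) (f (iter t T (iter (m * (k + D)) T x), iter t S y') - eps) <=
              \sum_(t < k) f (iter (m * (k + D) + t) T x, iter (m * (k + D) + t) S y).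
      apply: ler_sum => t _.
      have e1 : iter t T (iter (m * (k + D)) T x) = iter (m * (k + D) + t) T x
        by rewrite [(m * (k + D) + t)%N]addnC iterD.
      rewrite e1.
      have := hu (iter (m * (k + D) + t) T x, iter (m * (k + D) + t) S y)
                 (iter (m * (k + D) + t) T x, iter t S y').
      rewrite /= mdistxx => /(_ eta00 (le_lt_trans (hy m t (ltn_ord t)) eta3)).
      by rewrite ltr_norml => /andP [h _]; lra.
    move: h3; rewrite sumrB sumr_const card_ord -mulr_natl mulrBr => h3 /=.
    lra.
  have [D1 hD1] := key 1 ltr01.
  have hg1 := hD1 1%N y0 (- B) isT (fun x => hAl 1%N x y0).
  case hg : (gammaf T S f) hg1 => [g| |] hg1; last first.
  + by [].
  + by rewrite leey.
  apply/lee_addgt0Pr => eps eps0.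
  have [D hD] := key eps eps0.
  rewrite -EFinD; apply: (LS_le _ (g + eps) (D%:R * (g + B))) => k k0.
  apply: ge_ereal_sup => _ [y' _ <-].
  apply: le_einf_real => c hc.
  have hc' : forall x, c <= avg T S f k x y'.
    move=> x; rewrite -lee_fin; apply: le_trans (ltW hc) _.
    by apply: ereal_inf_lbound; exists x.
  have kpos : 0 < k%:R :> R by rewrite ltr0n.
  have kDpos : 0 < (k + D)%:R :> R by rewrite ltr0n addn_gt0 k0.
  have := hD k y' c k0 hc'; rewrite hg lee_fin ler_pdivrMr // natrD => h.
  have h2 : (c - g - eps) * k%:R <= D%:R * (g + B) by nra.
  have : c - g - eps <= D%:R * (g + B) / k%:R by rewrite ler_pdivlMr.
  rewrite lee_fin; lra.
- move=> hspec.
  apply: ge_ereal_sup => _ [y _ <-].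
  case: (pselect (exists x : X, True)) => [[x0 _t]|Xn]; last first.
    apply: le_trans (leey _) _.
    rewrite /deltaf limn_esupE; apply: le_ereal_inf_tmp => _ [n _ <-].
    rewrite /esups /=; apply: le_trans _ (ereal_sup_ubound _); last by exists n => /=.
    apply: le_trans _ (ereal_sup_ubound _); last by exists y.
    apply: le_ereal_inf_tmp => z [x _ _]; exfalso; apply: Xn; by exists x.
  have sk_le : forall k, (ereal_sup [set ereal_inf [set (avg T S f k x y')%:E
        | x in [set: X]] | y' in [set: Y]] <= B%:E)%E.
    move=> k; apply: ge_ereal_sup => _ [y' _ <-]; apply: ge_ereal_inf.
    by exists (avg T S f k x0 y')%:E; [exists x0 | rewrite lee_fin].
  have sk_ge : forall k, ((- B)%:E <= ereal_sup [set ereal_inf [set (avg T S f k x y')%:E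
        | x in [set: X]] | y' in [set: Y]])%E.
    move=> k; apply: le_trans _ (ereal_sup_ubound _); last by exists y.
    by apply: le_ereal_inf_tmp => _ [x _ <-]; rewrite lee_fin.
  have dle : (deltaf T S f <= B%:E)%E.
    by apply: (LS_le _ B 0) => k _; rewrite mul0r addr0; exact: sk_le.
  have dge : ((- B)%:E <= deltaf T S f)%E.
    by apply: (LS_ge _ (- B) 0) => k _; rewrite mul0r subr0; exact: sk_ge.
  case hd : (deltaf T S f) dle dge => [d| |] dle dge; last first.
  + by [].
  + by [].
  have hdlt : forall e, 0 < e -> exists n0, forall k, (n0 <= k)%N ->
     (ereal_sup [set ereal_inf [set (avg T S f k x y')%:E
        | x in [set: X]] | y' in [set: Y]] < (d + e)%:E)%E.
    move=> e e0; apply: LS_lt; rewrite -[limn_esup _]/(deltaf T S f) hd lte_fin; lra.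
  apply/lee_addgt0Pr => eps eps0.
  pose e := eps / 4.
  have e0 : 0 < e by rewrite divr_gt0.
  have [eta0 eta00 hu] := unif_cont _ _ _ f cXY cf e e0.
  have eta2 : 0 < eta0 / 2 by rewrite divr_gt0.
  have eta3 : eta0 / 2 < eta0 by lra.
  have [D hD] := inf_trace T Tinv cX cT T2 hspec (eta0 / 2) eta2.
  have [n0 hn0] := hdlt e e0.
  have [K hK] : exists K : nat, D%:R * (B - d) / e < K%:R.
    by exists (Num.truncn (D%:R * (B - d) / e)).+1; exact: truncnS_gt.
  pose k := maxn (maxn n0 1) K.
  have k0 : (0 < k)%N by rewrite /k; lia.
  have kn0 : (n0 <= k)%N by rewrite /k; lia.
  have kbig : D%:R * (B - d) / e < k%:R.
    by apply: lt_le_trans hK _; rewrite ler_nat /k; lia.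
  have hz : forall m, exists x', avg T S f k x' (iter (m * (k + D)) S y) < d + 2 * e.
    move=> m; have hs := hn0 k kn0.
    have : (ereal_inf [set (avg T S f k x (iter (m * (k + D)) S y))%:E | x in [set: X]]
              < (d + 2 * e)%:E)%E.
      apply: (le_lt_trans _ (lt_trans hs _)).
        by apply: ereal_sup_ubound; exists (iter (m * (k + D)) S y).
      by rewrite lte_fin; lra.
    by move=> /ereal_inf_lt [_ [x' _ <-]]; rewrite lte_fin => h; exists x'.
  have [zs hzs] := choice hz.
  have [x hx] := hD k zs k0.
  apply: ge_ereal_inf; exists (limn_esup (fun N => (avg T S f N x y)%:E)); first by exists x.
  apply: le_trans (block_LS_le k D B (d + 3 * e) (fun n => f (iter n T x, iter n S y)) k0 _ _) _.
  + by move=> n; exact: hB.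
  + move=> m.
    have h2 : \sum_(t < k) f (iter t T (zs m), iter t S (iter (m * (k + D)) S y))
              <= k%:R * (d + 2 * e).
      by rewrite -avg_mul //; apply: ler_wpM2l; [rewrite ler0n | exact: ltW].
    have h3 : \sum_(t < k) f (iter (m * (k + D) + t) T x, iter (m * (k + D) + t) S y) <=
        \sum_(t < k) (f (iter t T (zs m), iter t S (iter (m * (k + D)) S y)) + e).
      apply: ler_sum => t _.
      have e1 : iter t S (iter (m * (k + D)) S y) = iter (m * (k + D) + t) S y
        by rewrite [(m * (k + D) + t)%N]addnC iterD.
      rewrite e1.
      have := hu (iter (m * (k + D) + t) T x, iter (m * (k + D) + t) S y)
                 (iter t T (zs m), iter (m * (k + D) + t) S y).
      rewrite /= mdistxx => /(_ (le_lt_trans (hx m t (ltn_ord t)) eta3) eta00).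
      by rewrite ltr_norml => /andP [_ h]; lra.
    move: h3; rewrite big_split /= sumr_const card_ord -mulr_natl => h3.
    rewrite /=; nra.
  have kpos : 0 < k%:R :> R by rewrite ltr0n.
  have kDpos : 0 < (k + D)%:R :> R by rewrite ltr0n addn_gt0 k0.
  have hk : D%:R * (B - d) < k%:R * e by rewrite -ltr_pdivrMr // mulrC.
  rewrite -EFinD lee_fin ler_pdivrMr // natrD.
  have : eps = 4 * e by rewrite /e; lra.
  have hDe : 0 <= D%:R * e by rewrite mulr_ge0 // ltW.
  move=> ->; nra.
Qed.
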